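(* Let $q$ be a power of $2$, $a\in\mathbb{F}_q$, and $n\ge1$ an integer with $\gcd(n+1,q)=1$. Then $n$ is even, and the code $C_n(a)$ is LCD if and only if $$a\notin\{-1+\theta^i+\theta^{-i} : 1\le i\le n/2\},$$ where $\theta\in\overline{\mathbb{F}}_q$ is a primitive $(n+1)$-th root of unity.
   Context: For $a\in\mathbb{F}_q$ and $n \ge 1$, $T_n(a)$ denotes the $n\times n$ symmetric tridiagonal Toeplitz matrix over $\mathbb{F}_q$ with all diagonal entries equal to $a$, all entries on the first super- and sub-diagonals equal to $1$, and all other entries $0$. $C_n(a)$ is the $[2n,n]$ linear code over $\mathbb{F}_q$ with generator matrix $[I_n \mid T_n(a)]$. A linear code $C$ is LCD (linear complementary dual) if $C\cap C^\perp=\{0\}$, where $C^\perp$ is the dual with respect to the standard Euclidean inner product. *)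

(* Defs.v *)
From HB Require Import structures.
From mathcomp Require Import all_boot all_order all_algebra all_field.
Set Implicit Arguments.
Unset Strict Implicit.
Unset Printing Implicit Defensive.
Import GRing.Theory.
Local Open Scope ring_scope.

Definition tridiag (F : nzRingType) (n : nat) (a : F) : 'M[F]_n :=
  \matrix_(i < n, j < n)
     if i == j then a
     else if ((i : nat) == j.+1) || ((j : nat) == i.+1) then 1 else 0.

Definition gen_Cn (F : nzRingType) (n : nat) (a : F) : 'M[F]_(n, n + n) :=
  row_mx 1%:M (tridiag n a).

Definition in_code (F : fieldType) (k m : nat) (G : 'M[F]_(k, m)) (x : 'rV[F]_m) : Prop :=
  (x <= G)%MS.

Definition in_dual (F : fieldType) (k m : nat) (G : 'M[F]_(k, m)) (x : 'rV[F]_m) : Prop :=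
  forall y : 'rV[F]_m, in_code G y -> x *m y^T = 0.

Definition is_LCD (F : fieldType) (k m : nat) (G : 'M[F]_(k, m)) : Prop :=
  forall x : 'rV[F]_m, in_code G x -> in_dual G x -> x = 0.

(* Main.v *)
Require Import Defs.
From HB Require Import structures.
From mathcomp Require Import all_boot all_order all_algebra all_field.
From mathcomp Require Import ring.
Set Implicit Arguments.
Unset Strict Implicit.
Import GRing.Theory.
Local Open Scope ring_scope.

Fixpoint sq (R : nzRingType) (c : R) (k : nat) : R :=
  match k with
  | 0 => 0
  | S k1 => match k1 with
            | 0 => 1
            | S k' => c * @sq R c k1 + @sq R c k'
            end
  end.
Arguments sq {R} c k.

Lemma sqSS (R : nzRingType) (c : R) k : sq c k.+2 = c * sq c k.+1 + sq c k.
Proof. by []. Qed.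

Lemma char2_add (R : comNzRingType) (x : R) : 2%:R = 0 :> R -> x + x = 0.
Proof. move=> h2; by rewrite -mulr2n -mulr_natr h2 mulr0. Qed.

Lemma sq_double (R : comNzRingType) (c : R) : 2%:R = 0 :> R -> forall m,
  sq c (m + m)%N.+1 = (sq c m.+1 + sq c m) ^+ 2 /\ sq c (m + m)%N = c * sq c m ^+ 2.
Proof.
move=> h2; elim=> [|m [IH1 IH2]]; first by split; rewrite ?addr0 ?expr1n ?expr0n ?mulr0.
have E2 : sq c (m + m)%N.+2 = c * sq c m.+1 ^+ 2.
  rewrite sqSS IH1 IH2.
  apply/eqP; rewrite -subr_eq0.
  have -> : c * (sq c m.+1 + sq c m) ^+ 2 + c * sq c m ^+ 2 - c * sq c m.+1 ^+ 2
     = 2%:R * (c * sq c m.+1 * sq c m + c * sq c m ^+ 2) by ring.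
  by rewrite h2 mul0r.
split; first rewrite addSn addnS sqSS E2 IH1 sqSS; last by rewrite addSn addnS.
apply/eqP; rewrite -subr_eq0.
have -> : c * (c * sq c m.+1 ^+ 2) + (sq c m.+1 + sq c m) ^+ 2 -
    (c * sq c m.+1 + sq c m + sq c m.+1) ^+ 2
  = 2%:R * (- (c * sq c m.+1 * sq c m) - c * sq c m.+1 ^+ 2) by ring.
by rewrite h2 mul0r.
Qed.

Lemma sq_xy (R : comNzRingType) (x y : R) : 2%:R = 0 :> R -> x * y = 1 ->
  forall k, sq (x + y) k * (x + y) = x ^+ k + y ^+ k.
Proof.
move=> h2 hxy.
suff H : forall k, sq (x + y) k * (x + y) = x ^+ k + y ^+ k /\
                   sq (x + y) k.+1 * (x + y) = x ^+ k.+1 + y ^+ k.+1.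
  by move=> k; case: (H k).
elim=> [|k [IH1 IH2]].
  by split; rewrite /= ?mul0r ?mul1r ?expr0 ?expr1 ?char2_add.
split=> //.
rewrite sqSS mulrDl -mulrA IH2 IH1.
apply/eqP; rewrite -subr_eq0.
have -> : (x + y) * (x ^+ k.+1 + y ^+ k.+1) + (x ^+ k + y ^+ k) - (x ^+ k.+2 + y ^+ k.+2)
   = (x * y - 1) * (x ^+ k + y ^+ k) + 2%:R * (x ^+ k + y ^+ k).
  rewrite !exprS; ring.
by rewrite hxy h2 subrr !mul0r addr0.
Qed.

Lemma sq0 (R : comNzRingType) k : sq (0 : R) k + sq 0 k.+1 = 1.
Proof.
elim: k => [|k IH]; first by rewrite add0r.
by rewrite sqSS mul0r add0r addrC.
Qed.

Lemma sq_morph (R S : comNzRingType) (g : {rmorphism R -> S}) c k :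
  g (sq c k) = sq (g c) k.
Proof.
suff H : g (sq c k) = sq (g c) k /\ g (sq c k.+1) = sq (g c) k.+1 by case: H.
elim: k => [|k [IH1 IH2]]; first by rewrite /= rmorph0 rmorph1.
by split=> //; rewrite !sqSS rmorphD rmorphM IH1 IH2.
Qed.

Lemma sq_horner (L : fieldType) (c : L) k : (sq ('X : {poly L}) k).[c] = sq c k.
Proof.
have := @sq_morph _ _ (horner_eval c) 'X k. by rewrite /= !horner_evalE hornerX.
Qed.

Lemma size_sqX (L : fieldType) k : (size (sq ('X : {poly L}) k) <= k)%N.
Proof.
suff H : (size (sq ('X : {poly L}) k) <= k)%N /\ (size (sq ('X : {poly L}) k.+1) <= k.+1)%N by case: H.
elim: k => [|k [IH1 IH2]]; first by rewrite /= size_poly0 size_poly1.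
split=> //; rewrite sqSS.
apply: leq_trans (size_add _ _) _; rewrite geq_max; apply/andP; split.
  apply: leq_trans (size_mul_leq _ _) _; rewrite size_polyX.
  by case: (size _) IH2 => //= s; rewrite addSn.
by apply: leq_trans IH1 _; apply: leqW; apply: leqW.
Qed.

Section L.
Variables (L : fieldType) (m : nat) (theta : L).
Hypothesis h2 : 2%:R = 0 :> L.
Hypothesis hprim : (m + m).+1.-primitive_root theta.

Definition rr (i : nat) := theta ^+ i + theta ^- i.
Definition RR (c : L) := sq c m.+1 + sq c m.

Lemma theta_neq0 : theta != 0.
Proof.
apply/negP=> /eqP t0; have := prim_expr_order hprim.
by rewrite t0 expr0n /= => /eqP; rewrite eq_sym oner_eq0.
Qed.

Lemma texp_eq i j : (theta ^+ i == theta ^+ j) = (i == j %[mod (m + m).+1]).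
Proof. exact: eq_prim_root_expr. Qed.

Lemma RR_rr i : (1 <= i <= m)%N -> RR (rr i) = 0.
Proof.
case/andP=> i1 im.
set x := theta ^+ i; set y := x^-1.
have x0 : x != 0 by rewrite expf_neq0 // theta_neq0.
have hxy : x * y = 1 by rewrite mulfV.
have hyx : y * x = 1 by rewrite mulrC.
have xN : x ^+ (m.+1 + m) = 1.
  by rewrite /x -exprM mulnC exprM addSn (prim_expr_order hprim) expr1n.
have c0 : x + y != 0.
  apply/negP=> /eqP c0.
  have : x * (x + y) = 0 by rewrite c0 mulr0.
  rewrite mulrDr hxy => /eqP; rewrite addr_eq0 => /eqP x2.
  have : theta ^+ (i + i) == theta ^+ 0.
    by rewrite exprD -/x x2 expr0 eq_sym -addr_eq0 char2_add.
  rewrite texp_eq mod0n modn_small; first by rewrite addn_eq0; case: i i1 {x x0 hxy hyx xN c0 y x2 im}.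
  by rewrite ltnS leq_add.
have := sq_xy h2 hxy m.+1; have := sq_xy h2 hxy m.
have ey1 : y ^+ m.+1 = x ^+ m.
  by rewrite -[y ^+ _]mulr1 -xN exprD mulrA -exprMn hyx expr1n mul1r.
have ey2 : y ^+ m = x ^+ m.+1.
  by rewrite -[y ^+ _]mulr1 -xN exprD mulrCA -exprMn hyx expr1n mulr1.
rewrite ey1 ey2 => E1 E2.
apply/eqP; rewrite -(mulIr_eq0 _ (mulIf c0)) /RR mulrDl E1 E2.
by rewrite [X in X + _ == _]addrC char2_add.
Qed.

Lemma rr_inj i j : (1 <= i <= m)%N -> (1 <= j <= m)%N -> rr i = rr j -> i = j.
Proof.
case/andP=> i1 im; case/andP=> j1 jm.
set x := theta ^+ i; set y := theta ^+ j => E.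
have x0 : x != 0 by rewrite expf_neq0 // theta_neq0.
have y0 : y != 0 by rewrite expf_neq0 // theta_neq0.
have : (x - y) * (x * y - 1) = x * y * (rr i - rr j).
  rewrite /rr -/x -/y; field; by apply/andP.
rewrite E subrr mulr0 => /eqP; rewrite mulf_eq0 !subr_eq0 => /orP [] /eqP.
  move/eqP; rewrite texp_eq !modn_small //; first by move/eqP.
    by rewrite ltnS (leq_trans jm) // leq_addl.
  by rewrite ltnS (leq_trans im) // leq_addl.
rewrite /x /y -exprD -(expr0 theta) => /eqP; rewrite texp_eq mod0n modn_small.
  by rewrite addn_eq0 => /andP [/eqP -> /eqP ->].
by rewrite ltnS leq_add.
Qed.

Lemma converse c : RR c = 0 -> exists i, [/\ (1 <= i)%N, (i <= m)%N & c = rr i].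
Proof.
move=> Rc.
have [/mapP [i]|] := boolP (c \in map rr (iota 1 m)).
  rewrite mem_iota add1n ltnS => /andP [i1 im] ->; by exists i.
move=> cnot; exfalso.
pose P := sq ('X : {poly L}) m.+1 + sq 'X m.
have Pe : forall d, P.[d] = RR d by move=> d; rewrite hornerD !sq_horner.
have P0 : P != 0.
  apply/negP=> /eqP P0; have := Pe 0; rewrite P0 horner0 /RR addrC sq0 => /eqP.
  by rewrite eq_sym oner_eq0.
have := max_poly_roots (rs := c :: map rr (iota 1 m)) P0.
have sP : (size P <= m.+1)%N.
  apply: leq_trans (size_add _ _) _; rewrite geq_max size_sqX.
  by rewrite (leq_trans (size_sqX _ _)).
rewrite /= size_map size_iota ltnNge (leq_trans sP) //.
rewrite cnot /= map_inj_in_uniq ?iota_uniq; last first.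
  move=> i j; rewrite !mem_iota !add1n !ltnS; exact: rr_inj.
rewrite /root Pe Rc eqxx /=.
have -> : all (root P) (map rr (iota 1 m)).
  apply/allP=> r /mapP [i]; rewrite mem_iota add1n ltnS => hi ->.
  by rewrite /root Pe RR_rr.
by move=> H; have := H isT isT.
Qed.
End L.

Section Mx.
Variables (F : fieldType) (n : nat) (a : F).
Hypothesis h2 : 2%:R = 0 :> F.

Definition vv (u : 'rV[F]_n) (k : nat) := \sum_(i < n) u 0 i * ((i : nat) == k)%:R.
Definition vm (u : 'rV[F]_n) (k : nat) := if k is k'.+1 then vv u k' else 0.

Lemma vv_lt u (i : 'I_n) : vv u i = u 0 i.
Proof.
rewrite /vv (bigD1 i) //= eqxx mulr1 big1 ?addr0 // => j hj.
by rewrite (negbTE (hj : (j : nat) != i)) mulr0.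
Qed.

Lemma vv_ge u k : (n <= k)%N -> vv u k = 0.
Proof.
move=> hk; rewrite /vv big1 // => i _.
rewrite (_ : ((i : nat) == k) = false) ?mulr0 //.
by apply/negbTE; rewrite neq_ltn (leq_trans (ltn_ord i)).
Qed.

Lemma entry_nat (ii jj : nat) :
  (ii == jj)%:R + (if ii == jj then a else if (ii == jj.+1) || (jj == ii.+1) then 1 else 0)
  = (1 + a) * (ii == jj)%:R + (ii == jj.+1)%:R + (ii.+1 == jj)%:R :> F.
Proof.
case: (ltngtP ii jj) => h.
- rewrite (_ : (ii == jj.+1) = false); last by apply/negbTE; rewrite neq_ltn ltnS (ltnW h) ?orbT.
  by rewrite [jj == _]eq_sym; case: (_ == _); rewrite /= ?mulr0 ?add0r ?addr0.
- rewrite (_ : (ii.+1 == jj) = false); last by apply/negbTE; rewrite neq_ltn ltnS (ltnW h) ?orbT.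
  rewrite (_ : (jj == ii.+1) = false); last by apply/negbTE; rewrite neq_ltn ltnS (ltnW h).
  by case: (_ == _); rewrite /= ?mulr0 ?add0r ?addr0 ?orbF.
- subst. rewrite (_ : (jj == jj.+1) = false); last by apply/negbTE; rewrite neq_ltn ltnSn.
  rewrite (_ : (jj.+1 == jj) = false); last by apply/negbTE; rewrite neq_ltn ltnSn orbT.
  by rewrite mulr1 !addr0.
Qed.

Lemma entry u (j : 'I_n) :
  (u *m (1%:M + tridiag n a)) 0 j = (1 + a) * vv u j + vv u j.+1 + vm u j.
Proof.
rewrite !mxE.
under eq_bigr => i _ do rewrite !mxE entry_nat !mulrDr.
rewrite !big_split /=.
congr (_ + _ + _).
  by rewrite /vv mulr_sumr; apply: eq_bigr => i _; rewrite mulrCA.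
rewrite /vm; case: (nat_of_ord j) => [|j'].
  by rewrite big1 // => i _; rewrite mulr0.
by [].
Qed.
End Mx.

Section Ker.
Variables (F : fieldType) (n : nat) (a : F).
Hypothesis h2 : 2%:R = 0 :> F.
Hypothesis n1 : (0 < n)%N.

Let b := 1 + a.
Let M := 1%:M + tridiag n a.

Lemma opp2 (x : F) : - x = x.
Proof. by apply/eqP; rewrite eq_sym -addr_eq0 char2_add. Qed.

Lemma eq2 (x y : F) : x + y = 0 -> y = x.
Proof. by move=> /eqP; rewrite addrC addr_eq0 opp2 => /eqP. Qed.

Lemma rec_sol (w : nat -> F) :
  (forall j, (j < n)%N -> b * w j + w j.+1 + (if j is j'.+1 then w j' else 0) = 0) ->
  forall k, (k < n)%N -> w k = w 0%N * sq b k.+1 /\ w k.+1 = w 0%N * sq b k.+2.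
Proof.
move=> E; elim=> [|k IH] hk.
  split; first by rewrite /= mulr1.
  have := E 0%N hk; rewrite addr0 => /eq2 ->.
  by rewrite sqSS /= mulr1 addr0 mulrC.
have [IH1 IH2] := IH (ltnW hk).
split=> //.
have := E k.+1 hk; rewrite -addrA [w k.+2 + _]addrC addrA => /eq2 ->.
rewrite IH1 IH2 [sq b k.+3]sqSS; ring.
Qed.
Lemma ker_iff : (forall u : 'rV[F]_n, u *m M = 0 -> u = 0) <-> sq b n.+1 != 0.
Proof.
split.
  move=> H; apply/negP=> /eqP s0.
  pose u : 'rV[F]_n := \row_(i < n) sq b i.+1.
  have vvu : forall k, (k <= n)%N -> vv u k = sq b k.+1.
    move=> k; rewrite leq_eqVlt => /orP [/eqP -> | hk].
      by rewrite vv_ge // s0.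
    by rewrite (vv_lt u (Ordinal hk)) mxE.
  have : u *m M = 0.
    apply/rowP => j; rewrite entry mxE (vvu j) ?(ltnW (ltn_ord j)) // (vvu j.+1) //.
    have vmj : vm u j = sq b j.
      rewrite /vm; case: (nat_of_ord j) (ltn_ord j) => [|j'] hj //.
      by rewrite vvu //; apply: ltnW; apply: ltnW.
    by rewrite vmj [sq b j.+2]sqSS -/b addrA char2_add // add0r char2_add.
  move/H => /rowP /(_ (Ordinal n1)); rewrite !mxE /= => /eqP.
  by rewrite oner_eq0.
move=> s0 u hu.
have E : forall j, (j < n)%N -> b * vv u j + vv u j.+1 + (if j is j'.+1 then vv u j' else 0) = 0.
  by move=> j hj; have := entry a u (Ordinal hj); rewrite hu mxE.
have := rec_sol E (k := n.-1); rewrite prednK // => /(_ (leqnn _)) [_].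
rewrite vv_ge // => /esym /eqP; rewrite mulf_eq0 (negbTE s0) orbF => /eqP w0.
apply/rowP => i; rewrite mxE -vv_lt.
have [-> _] := rec_sol E (ltn_ord i).
by rewrite w0 mul0r.
Qed.
End Ker.

Section LCD.
Variables (F : fieldType) (n : nat).
Hypothesis h2 : 2%:R = 0 :> F.

Lemma dualP (G : 'M[F]_(n, n + n)) x : in_dual G x <-> x *m G^T = 0.
Proof.
split.
  move=> H; apply/rowP => j.
  have := congr1 (fun M : 'M_1 => M 0 0) (H _ (row_sub j G)).
  rewrite [in X in _ = X -> _]mxE => e; rewrite [RHS]mxE -e !mxE; apply: eq_bigr => k _; rewrite !mxE //.
move=> H y /submxP [v ->].
by rewrite trmx_mul mulmxA H mul0mx.
Qed.

Lemma lcd_iff1 (T : 'M[F]_n) :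
  is_LCD (row_mx 1%:M T) <-> (forall u : 'rV[F]_n, u *m (row_mx 1%:M T *m (row_mx 1%:M T)^T) = 0 -> u = 0).
Proof.
set G := row_mx 1%:M T.
have uG0 : forall u : 'rV[F]_n, u *m G = 0 -> u = 0.
  move=> u; rewrite /G mul_mx_row mulmx1 => /eqP; rewrite row_mx_eq0 => /andP [/eqP -> _] //.
split.
  move=> H u hu; apply: uG0; apply: H.
    by apply/submxP; exists u.
  by apply/dualP; rewrite -mulmxA.
move=> H x /submxP [u ->] /dualP hx.
by rewrite (H u) ?mul0mx // mulmxA.
Qed.

Lemma lcd_iff (T : 'M[F]_n) : T^T = T ->
  is_LCD (row_mx 1%:M T) <-> (forall u : 'rV[F]_n, u *m (1%:M + T) = 0 -> u = 0).
Proof.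
move=> Tsym.
have E : row_mx 1%:M T *m (row_mx 1%:M T)^T = (1%:M + T) *m (1%:M + T).
  rewrite tr_row_mx trmx1 Tsym mul_row_col mul1mx.
  rewrite mulmxDl !mulmxDr !mul1mx !mulmx1 addrA -[1%:M + T + T]addrA.
  have -> : T + T = 0 by apply/matrixP => i j; rewrite !mxE char2_add.
  by rewrite addr0.
rewrite lcd_iff1 E; split.
  move=> H u hu; apply: H; by rewrite mulmxA hu mul0mx.
move=> H u hu; apply: (H); apply: (H); by rewrite -mulmxA.
Qed.
End LCD.

Lemma tridiag_sym (F : nzRingType) n (a : F) : (tridiag n a)^T = tridiag n a.
Proof.
apply/matrixP => i j; rewrite !mxE eq_sym; congr (if _ then _ else _).
by rewrite orbC.
Qed.

Theorem theorem2p3 (F : finFieldType) (m : nat) (a : F) (n : nat)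
    (L : fieldType) (f : {rmorphism F -> L}) (theta : L) :
  #|F| = (2 ^ m)%N ->
  (1 <= n)%N ->
  coprime n.+1 #|F| ->
  (n.+1).-primitive_root theta ->
  ~~ odd n /\
  (is_LCD (gen_Cn n a) <->
   ~ (exists i : nat, [/\ (1 <= i)%N, (i <= n %/ 2)%N &
        f a = -1 + theta ^+ i + theta ^- i])).
Proof.
move=> hF n1 hcop hprim.
have h2F : (2%:R : F) = 0 by apply: pcharf0; apply: (card_finPcharP hF).
have h2L : (2%:R : L) = 0 by rewrite -(rmorph_nat f) h2F rmorph0.
have m0 : (0 < m)%N.
  case: m hF => // hF; have := card_finNzRing_gt1 F; by rewrite hF.
have ev : ~~ odd n.
  by move: hcop; rewrite hF coprime_pexpr // coprimen2.
split=> //.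
set k := n./2.
have nk : n = (k + k)%N by rewrite addnn -[LHS]odd_double_half (negbTE ev).
have nk2 : (n %/ 2)%N = k by rewrite nk addnn -muln2 mulnK.
rewrite /gen_Cn lcd_iff // ?tridiag_sym // ker_iff // nk2.
rewrite nk in hprim.
rewrite -(fmorph_eq0 f) sq_morph rmorphD rmorph1 nk.
have [e _] := sq_double (f a + 1 - 1 + 1) h2L k.
rewrite (_ : 1 + f a = f a + 1 - 1 + 1); last by rewrite addrK addrC.
rewrite e sqrf_eq0; split.
  move=> /negP H [i [i1 ik]] ea; apply: H; apply/eqP.
  rewrite ea; have -> : -1 + theta ^+ i + theta ^- i + 1 - 1 + 1 = theta ^+ i + theta ^- i by rewrite addrK; ring.
  by apply: (RR_rr h2L hprim); rewrite i1 ik.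
move=> H; apply/negP=> /eqP R0.
have [i [i1 ik ci]] := converse h2L hprim R0.
apply: H; exists i; split=> //.
move: ci; rewrite addrK /rr => ci; rewrite -addrA -ci; ring.
Qed.
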